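(* Let $V$ be a finite set, $\mu\colon\binom V2\to\mathbb{Z}_+$, and suppose $V=V_1\sqcup V_2$ with $V_1,V_2$ nonempty and $\mu(e)=1$ for every edge $e$ with one endpoint in $V_1$ and the other in $V_2$. Then $(\Delta_V)_\mu\cong(\Delta_{V_1})_{\mu_1}\ast(\Delta_{V_2})_{\mu_2}$, where $\mu_1,\mu_2$ are the restrictions of $\mu$ to $\binom{V_1}{2}$ and $\binom{V_2}{2}$.
   Context: $\Delta_V$ is the full simplex on $V$, viewed as the simplicial poset of nonempty subsets of $V$. Edge inflation: for $\mu\colon\binom V2\to\mathbb{Z}_+$, $(\Delta_V)_\mu$ is the poset of pairs $(I,c_I)$ with $\varnothing\neq I\subseteq V$ and $c_I\colon\binom I2\to\mathbb{Z}_+$, $c_I(e)\in\{1,\dots,\mu(e)\}$, ordered by $(I,c_I)<(J,c_J)$ iff $I\subsetneq J$ and $c_I=c_J|_{\binom I2}$. The join $K_1\ast K_2$ of simplicial posets is the simplicial poset whose simplices are $J_1\ast J_2$ with $J_i\in K_i$ or empty (not both empty), ordered componentwise. *)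

(* Defs.v *)
From mathcomp Require Import all_boot.
Set Implicit Arguments. Unset Strict Implicit. Unset Printing Implicit Defensive.

(* Edge multiplicities: mu : {set W} -> nat, only its values on 2-element
   subsets (edges of binom(W,2)) matter. *)

(* A simplex of the edge-inflated simplex (Delta_W)_mu: a nonempty I and a
   colouring c_I of binom(I,2) with c_I(e) in {1..mu e}.  The colouring is
   stored as a finite function on all subsets, normalised to 0 off binom(I,2)
   so that equality of simplices is equality of pairs (I, c_I). *)
Definition is_edge (W : finType) (I e : {set W}) : bool :=
  (e \subset I) && (#|e| == 2).

Definition infl_valid (W : finType) (mu : {set W} -> nat)
    (p : {set W} * {ffun {set W} -> nat}) : bool :=
  [&& p.1 != set0,
      [forall e : {set W}, is_edge p.1 e ==> (0 < p.2 e <= mu e)] &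
      [forall e : {set W}, ~~ is_edge p.1 e ==> (p.2 e == 0)]].

Definition infl (W : finType) (mu : {set W} -> nat) : Type :=
  {p : {set W} * {ffun {set W} -> nat} | infl_valid mu p}.

Definition infl_lt (W : finType) (mu : {set W} -> nat) (x y : infl mu) : Prop :=
  ((sval x).1 \proper (sval y).1) /\
  forall e : {set W}, is_edge (sval x).1 e -> (sval x).2 e = (sval y).2 e.

Definition join_t (K1 K2 : Type) : Type :=
  {p : option K1 * option K2 | isSome p.1 || isSome p.2}.

Definition opt_le (K : Type) (lt : K -> K -> Prop) (a b : option K) : Prop :=
  match a, b with
  | None, _ => True
  | Some _, None => False
  | Some x, Some y => x = y \/ lt x y
  end.

Definition join_lt (K1 K2 : Type) (lt1 : K1 -> K1 -> Prop) (lt2 : K2 -> K2 -> Prop)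
    (x y : join_t K1 K2) : Prop :=
  sval x <> sval y /\ opt_le lt1 (sval x).1 (sval y).1 /\ opt_le lt2 (sval x).2 (sval y).2.

Definition poset_iso (A B : Type) (ltA : A -> A -> Prop) (ltB : B -> B -> Prop) : Prop :=
  exists f : A -> B, bijective f /\ forall x y, ltA x y <-> ltB (f x) (f y).

Definition restr_mu (V : finType) (A : {set V}) (mu : {set V} -> nat)
    : {set {x : V | x \in A}} -> nat :=
  fun e => mu [set val x | x in e].

(* Main.v *)
Require Import Defs.
From mathcomp Require Import all_boot.
Set Implicit Arguments. Unset Strict Implicit. Unset Printing Implicit Defensive.

Definition rawP (W : finType) := ({set W} * {ffun {set W} -> nat})%type.

Definition vz (W : finType) (mu : {set W} -> nat) (p : rawP W) : bool :=
  [forall e : {set W}, is_edge p.1 e ==> (0 < p.2 e <= mu e)] &&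
  [forall e : {set W}, ~~ is_edge p.1 e ==> (p.2 e == 0)].

Definition raw_lt (W : finType) (p q : rawP W) : Prop :=
  p.1 \proper q.1 /\ forall e, is_edge p.1 e -> p.2 e = q.2 e.

Definition pre (V : finType) (A : {set V}) (e : {set V}) : {set {x : V | x \in A}} :=
  [set x | val x \in e].

Definition res (V : finType) (A : {set V}) (p : rawP V) : rawP {x : V | x \in A} :=
  (pre A p.1, [ffun e : {set {x : V | x \in A}} => p.2 (val @: e)]).

Lemma vzE (W : finType) (mu : {set W} -> nat) (p : rawP W) :
  vz mu p <-> (forall e, is_edge p.1 e -> 0 < p.2 e <= mu e) /\
              (forall e, ~~ is_edge p.1 e -> p.2 e = 0).
Proof.
split.
  by case/andP=> /forallP a /forallP b; split=> e H;
     [ exact: (implyP (a e) H) | exact/eqP/(implyP (b e) H)].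
by case=> a b; apply/andP; split; apply/forallP=> e; apply/implyP=> H;
   [exact: a | exact/eqP/b].
Qed.

Lemma validE (W : finType) (mu : {set W} -> nat) (p : rawP W) :
  infl_valid mu p = (p.1 != set0) && vz mu p.
Proof. by []. Qed.

Lemma imset_pre (V : finType) (A e : {set V}) : e \subset A -> val @: pre A e = e.
Proof.
move=> eA; apply/setP=> x; apply/imsetP/idP.
  by case=> y; rewrite inE => ye ->.
move=> xe; have xA : x \in A by exact: (subsetP eA).
by exists (exist _ x xA); rewrite // inE.
Qed.

Lemma pre_imset (V : finType) (A : {set V}) (e : {set {x : V | x \in A}}) :
  pre A (val @: e) = e.
Proof. by apply/setP=> x; rewrite inE mem_imset //; exact: val_inj. Qed.

Lemma card_val (V : finType) (A : {set V}) (e : {set {x : V | x \in A}}) :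
  #|val @: e| = #|e|.
Proof. by rewrite card_imset //; exact: val_inj. Qed.

Lemma val_sub (V : finType) (A : {set V}) (e : {set {x : V | x \in A}}) :
  val @: e \subset A.
Proof. by apply/subsetP=> x /imsetP [y _ ->]; exact: (valP y). Qed.

Lemma sub_val_pre (V : finType) (A I : {set V}) (e : {set {x : V | x \in A}}) :
  (val @: e \subset I) = (e \subset pre A I).
Proof.
apply/subsetP/subsetP=> H x.
  by move=> xe; rewrite inE; apply: H; rewrite mem_imset //; exact: val_inj.
by case/imsetP=> y ye ->; have := H y ye; rewrite inE.
Qed.

Lemma is_edge_res (V : finType) (A I : {set V}) (e : {set {x : V | x \in A}}) :
  is_edge (pre A I) e = is_edge I (val @: e).
Proof. by rewrite /is_edge sub_val_pre card_val. Qed.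

Lemma card_pre (V : finType) (A e : {set V}) : e \subset A -> #|pre A e| = #|e|.
Proof. by move=> eA; rewrite -card_val imset_pre. Qed.

Lemma vz_res (V : finType) (mu : {set V} -> nat) (A : {set V}) (p : rawP V) :
  vz mu p -> vz (@restr_mu V A mu) (res A p).
Proof.
case/vzE=> a b; apply/vzE; split=> e /=; rewrite ffunE is_edge_res.
  exact: a.
exact: b.
Qed.

Definition graw (V : finType) (V1 V2 : {set V}) (a1 : rawP {x : V | x \in V1})
  (a2 : rawP {x : V | x \in V2}) : rawP V :=
  let I := val @: a1.1 :|: val @: a2.1 in
  (I, [ffun e : {set V} => if is_edge I e then
        (if e \subset V1 then a1.2 (pre V1 e) else
         if e \subset V2 then a2.2 (pre V2 e) else 1) else 0]).

Lemma pre_U (V : finType) (A B : {set V}) (a : {set {x : V | x \in A}})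
  (b : {set {x : V | x \in B}}) : A :&: B = set0 ->
  pre A (val @: a :|: val @: b) = a.
Proof.
move=> AB; apply/setP=> x; rewrite inE in_setU mem_imset; last exact: val_inj.
case: (x \in a) => //=; apply/negP=> /imsetP [y _ E].
have h1 : sval x \in A := valP x. have h2 : sval y \in B := valP y.
rewrite -E in h2; have : sval x \in A :&: B by rewrite inE h1 h2.
by rewrite AB inE.
Qed.

Lemma edge_not2 (V : finType) (A B e : {set V}) : A :&: B = set0 ->
  e \subset A -> e \subset B -> #|e| = 2 -> False.
Proof.
move=> AB eA eB; have : e \subset A :&: B by rewrite subsetI eA eB.
by rewrite AB subset0 => /eqP ->; rewrite cards0.
Qed.

Lemma ffun_glue (V : finType) (A : {set V}) (mu : {set V} -> nat) (I : {set V})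
  (a : rawP {x : V | x \in A}) (c : {set V} -> nat) :
  vz (@restr_mu V A mu) a -> pre A I = a.1 ->
  (forall e : {set V}, e \subset A -> is_edge I e -> c e = a.2 (pre A e)) ->
  (forall e : {set V}, ~~ is_edge I e -> c e = 0) ->
  [ffun e : {set {x : V | x \in A}} => c (val @: e)] = a.2.
Proof.
case/vzE=> _ vb PI Hc H0; apply/ffunP=> e; rewrite ffunE.
case E: (is_edge I (val @: e)).
  by rewrite Hc ?val_sub // pre_imset.
by rewrite H0 ?E // vb // -PI is_edge_res E.
Qed.

Lemma res_graw1 (V : finType) (mu : {set V} -> nat) (V1 V2 : {set V})
  (a1 : rawP {x : V | x \in V1}) (a2 : rawP {x : V | x \in V2}) :
  V1 :&: V2 = set0 -> vz (@restr_mu V V1 mu) a1 ->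
  res V1 (graw a1 a2) = a1.
Proof.
move=> D v1; rewrite /res /graw /=.
have P1 : pre V1 (val @: a1.1 :|: val @: a2.1) = a1.1 by exact: pre_U.
case: a1 v1 P1 => I1 c1 v1 P1 /=; rewrite P1; congr pair.
apply: (ffun_glue v1 P1) => e.
  by move=> eA ed; rewrite ffunE ed eA.
by move=> ne; rewrite ffunE (negbTE ne).
Qed.

Lemma res_graw2 (V : finType) (mu : {set V} -> nat) (V1 V2 : {set V})
  (a1 : rawP {x : V | x \in V1}) (a2 : rawP {x : V | x \in V2}) :
  V1 :&: V2 = set0 -> vz (@restr_mu V V2 mu) a2 ->
  res V2 (graw a1 a2) = a2.
Proof.
move=> D v2; rewrite /res /graw /=.
have D' : V2 :&: V1 = set0 by rewrite setIC.
have P2 : pre V2 (val @: a1.1 :|: val @: a2.1) = a2.1 by rewrite setUC; exact: pre_U.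
case: a2 v2 P2 => I2 c2 v2 P2 /=; rewrite P2; congr pair.
apply: (ffun_glue v2 P2) => e.
  move=> eA ed; rewrite ffunE ed eA.
  case: ifP => // e1; exfalso; case/andP: ed => _ /eqP; exact: edge_not2 D e1 eA.
by move=> ne; rewrite ffunE (negbTE ne).
Qed.

Lemma graw_valid (V : finType) (mu : {set V} -> nat) (V1 V2 : {set V})
  (Hmu : forall e : {set V}, #|e| = 2 -> 0 < mu e)
  (a1 : rawP {x : V | x \in V1}) (a2 : rawP {x : V | x \in V2}) :
  V1 :&: V2 = set0 -> vz (@restr_mu V V1 mu) a1 -> vz (@restr_mu V V2 mu) a2 ->
  (a1.1 != set0) || (a2.1 != set0) -> infl_valid mu (graw a1 a2).
Proof.
move=> D v1 v2 ne; rewrite validE; apply/andP; split.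
  rewrite /graw /=; apply/negP=> /eqP E.
  have : val @: a1.1 \subset set0 by rewrite -E subsetUl.
  have : val @: a2.1 \subset set0 by rewrite -E subsetUr.
  rewrite !subset0 !imset_eq0 => /eqP E2 /eqP E1.
  by case/orP: ne => /negP; apply; apply/eqP.
have P1 : pre V1 (val @: a1.1 :|: val @: a2.1) = a1.1 by exact: pre_U.
have P2 : pre V2 (val @: a1.1 :|: val @: a2.1) = a2.1
  by rewrite setUC; apply: pre_U; rewrite setIC.
case/vzE: v1 => va1 _; case/vzE: v2 => va2 _.
apply/vzE; rewrite /graw /=; split=> e; rewrite ffunE; last by move/negbTE ->.
move=> ed; rewrite ed; have ed' := ed; case/andP: ed' => eI /eqP c2.
case: ifP => e1.
  have := va1 (pre V1 e); rewrite /restr_mu imset_pre //; apply.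
  by rewrite -P1 is_edge_res imset_pre.
case: ifP => e2.
  have := va2 (pre V2 e); rewrite /restr_mu imset_pre //; apply.
  by rewrite -P2 is_edge_res imset_pre.
by rewrite /= Hmu.
Qed.

Definition optle (W : finType) (a b : rawP W) : Prop :=
  a.1 = set0 \/ a = b \/ raw_lt a b.

Lemma pre_sub (V : finType) (A I J : {set V}) : I \subset J -> pre A I \subset pre A J.
Proof. by move=> IJ; apply/subsetP=> x; rewrite !inE; apply: (subsetP IJ). Qed.

Lemma raw_eq (W : finType) (mu : {set W} -> nat) (p q : rawP W) :
  vz mu p -> vz mu q -> p.1 = q.1 ->
  (forall e, is_edge p.1 e -> p.2 e = q.2 e) -> p = q.
Proof.
case/vzE=> _ bp /vzE [_ bq]; case: p bp => I c /=; case: q bq => J d /= bq bp E H.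
subst J; congr pair; apply/ffunP=> e.
case E: (is_edge I e); first exact: H.
by rewrite bp ?E // bq ?E.
Qed.

Lemma lt_res (V : finType) (mu : {set V} -> nat) (A : {set V}) (p q : rawP V) :
  vz mu p -> vz mu q -> raw_lt p q ->
  res A p = res A q \/ raw_lt (res A p) (res A q).
Proof.
move=> vp vq [pq ag].
have vp' := vz_res A vp; have vq' := vz_res A vq.
have sub : pre A p.1 \subset pre A q.1 by apply: pre_sub; exact: proper_sub.
case: (eqVneq (pre A p.1) (pre A q.1)) => E.
  left; apply: (raw_eq vp' vq') => //= e.
  by rewrite !ffunE is_edge_res => /ag.
right; split; first by rewrite properEneq E sub.
by move=> e /=; rewrite !ffunE is_edge_res => /ag.
Qed.

Lemma res_le (V : finType) (A : {set V}) (p q : rawP V) :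
  optle (res A p) (res A q) ->
  pre A p.1 \subset pre A q.1 /\
  forall e : {set V}, e \subset A -> is_edge p.1 e -> p.2 e = q.2 e.
Proof.
case=> [/= E0 | [E | [pq ag]]].
- split; first by rewrite E0 sub0set.
  move=> e eA /andP [ep /eqP c2]; exfalso.
  have : pre A e \subset pre A p.1 by apply: pre_sub.
  by rewrite E0 subset0 -cards_eq0 card_pre // c2.
- split; first by case: E => ->.
  move=> e eA _; have := congr1 (fun r : rawP {x : V | x \in A} => r.2 (pre A e)) E.
  by rewrite /= !ffunE imset_pre.
- split; first exact: proper_sub.
  move=> e eA ed; have := ag (pre A e); rewrite /= !ffunE imset_pre //; apply.
  by rewrite is_edge_res imset_pre.
Qed.

Lemma cross (V : finType) (mu : {set V} -> nat) (V1 V2 : {set V})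
    (Hcov : V1 :|: V2 = [set: V])
    (Hcross : forall x y : V, x \in V1 -> y \in V2 -> mu [set x; y] = 1)
    (e : {set V}) :
  #|e| = 2 -> ~~ (e \subset V1) -> ~~ (e \subset V2) -> mu e = 1.
Proof.
move=> c2 /subsetPn [x xe xV1] /subsetPn [y ye yV2].
have xV2 : x \in V2.
  have : x \in V1 :|: V2 by rewrite Hcov inE.
  by rewrite inE (negbTE xV1).
have yV1 : y \in V1.
  have : y \in V1 :|: V2 by rewrite Hcov inE.
  by rewrite inE (negbTE yV2) orbF.
have xy : y != x by apply/eqP=> E; move: yV1; rewrite E (negbTE xV1).
have -> : e = [set y; x].
  apply/esym/eqP; rewrite eqEcard cards2 xy c2 andbT.
  by apply/subsetP=> z; rewrite !inE => /orP [] /eqP ->.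
exact: Hcross.
Qed.

Lemma order_iff (V : finType) (mu : {set V} -> nat) (V1 V2 : {set V})
    (Hcov : V1 :|: V2 = [set: V])
    (Hcross : forall x y : V, x \in V1 -> y \in V2 -> mu [set x; y] = 1)
    (p q : rawP V) :
  vz mu p -> vz mu q ->
  raw_lt p q <-> p <> q /\ optle (res V1 p) (res V1 q) /\ optle (res V2 p) (res V2 q).
Proof.
move=> vp vq; split.
  move=> lt; split.
    by move=> E; case: lt; rewrite E properxx.
  have h := fun A => @lt_res V mu A p q vp vq lt.
  split; first by case: (h V1) => H; [right; left | right; right].
  by case: (h V2) => H; [right; left | right; right].
case=> ne [o1 o2].
case: (res_le o1) => s1 a1; case: (res_le o2) => s2 a2.
have sub : p.1 \subset q.1.
  apply/subsetP=> x xp; have : x \in V1 :|: V2 by rewrite Hcov inE.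
  case/setUP=> xV.
    have : (exist _ x xV : {x | x \in V1}) \in pre V1 p.1 by rewrite inE.
    by move/(subsetP s1); rewrite inE.
  have : (exist _ x xV : {x | x \in V2}) \in pre V2 p.1 by rewrite inE.
  by move/(subsetP s2); rewrite inE.
have ag : forall e, is_edge p.1 e -> p.2 e = q.2 e.
  move=> e ed; case E1: (e \subset V1); first exact: a1.
  case E2: (e \subset V2); first exact: a2.
  case/andP: (ed) => ep /eqP c2.
  have m1 := cross Hcov Hcross c2 (negbT E1) (negbT E2).
  case/vzE: vp => va _; case/vzE: vq => vb _.
  have := va e ed; have : is_edge q.1 e by rewrite /is_edge c2 eqxx andbT (subset_trans ep sub).
  move/vb; rewrite m1.
  by case: (p.2 e) => [|[|]] //; case: (q.2 e) => [|[|]].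
split=> //; rewrite properEneq sub andbT.
by apply/eqP=> E; apply: ne; exact: (raw_eq vp vq).
Qed.

Lemma insub_val_vz (W : finType) (mu : {set W} -> nat) (a : rawP W) :
  vz mu a -> omap val (insub a : option (infl mu)) = if a.1 == set0 then None else Some a.
Proof.
move=> v; case: insubP => [u Hu Eu | Hn].
  by rewrite validE v andbT in Hu; rewrite /= (negbTE Hu) Eu.
by rewrite validE v andbT negbK in Hn; rewrite Hn.
Qed.

Definition zraw (W : finType) : rawP W := (set0, [ffun => 0]).

Lemma vz_empty (W : finType) (mu : {set W} -> nat) (a : rawP W) :
  vz mu a -> a.1 = set0 -> a = zraw W.
Proof.
case/vzE=> _ b; case: a b => I c /= b E; subst I; congr pair.
apply/ffunP=> e; rewrite ffunE b //; apply/negP=> /andP [].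
by rewrite subset0 => /eqP ->; rewrite cards0.
Qed.

Lemma vz_zraw (W : finType) (mu : {set W} -> nat) : vz mu (zraw W).
Proof.
apply/vzE; split=> e /=; last by rewrite ffunE.
by case/andP; rewrite subset0 => /eqP ->; rewrite cards0.
Qed.

Lemma insub_inj (W : finType) (mu : {set W} -> nat) (a b : rawP W) :
  vz mu a -> vz mu b -> (insub a : option (infl mu)) = insub b -> a = b.
Proof.
move=> va vb /(congr1 (omap val)); rewrite !insub_val_vz //.
case: eqP => Ea; case: eqP => Eb //; last by case.
by rewrite (vz_empty va Ea) (vz_empty vb Eb).
Qed.

Lemma opt_le_insub (W : finType) (mu : {set W} -> nat) (a b : rawP W) :
  vz mu a -> vz mu b ->
  opt_le (@infl_lt W mu) (insub a) (insub b) <-> optle a b.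
Proof.
move=> va vb; case: insubP => [u Hu Eu | Hn]; last first.
  by split=> // _; left; apply/eqP; rewrite validE va andbT negbK in Hn.
rewrite validE va andbT in Hu.
case: insubP => [w Hw Ew | Hm] /=.
  subst a b; rewrite /optle /infl_lt; split.
    by case=> [-> | H]; right; [left | right].
  case=> [E | [E | H]]; [by rewrite E eqxx in Hu | left; exact: val_inj | by right].
rewrite validE vb andbT negbK in Hm; split=> // - [E | [E | [H _]]].
- by rewrite E eqxx in Hu.
- by rewrite E (eqP Hm) eqxx in Hu.
- by move: H; rewrite (eqP Hm); move/proper_sub; rewrite subset0 (negbTE Hu).
Qed.

Definition fromopt (W : finType) (mu : {set W} -> nat) (o : option (infl mu)) : rawP W :=
  odflt (zraw W) (omap val o).

Lemma insub_fromopt (W : finType) (mu : {set W} -> nat) (o : option (infl mu)) :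
  insub (fromopt o) = o.
Proof.
case: o => [u|] /=; first exact: valK.
by apply: insubN; rewrite validE eqxx.
Qed.

Lemma vz_fromopt (W : finType) (mu : {set W} -> nat) (o : option (infl mu)) :
  vz mu (fromopt o).
Proof.
case: o => [u|] /=; last exact: vz_zraw.
by have := valP u; rewrite /= validE => /andP [].
Qed.

Lemma ne_fromopt (W : finType) (mu : {set W} -> nat) (o : option (infl mu)) :
  isSome o -> (fromopt o).1 != set0.
Proof. by case: o => [u|] //= _; have := valP u; rewrite /= validE => /andP []. Qed.

Theorem proposition4p9 (V : finType) (mu : {set V} -> nat)
    (V1 V2 : {set V})
    (Hmu : forall e : {set V}, #|e| = 2 -> 0 < mu e)
    (Hdisj : V1 :&: V2 = set0) (Hcov : V1 :|: V2 = [set: V])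
    (H1 : V1 != set0) (H2 : V2 != set0)
    (Hcross : forall x y : V, x \in V1 -> y \in V2 -> mu [set x; y] = 1) :
  poset_iso (@infl_lt V mu)
    (join_lt (@infl_lt _ (@restr_mu V V1 mu)) (@infl_lt _ (@restr_mu V V2 mu))).
Proof.
have vx : forall x : infl mu, vz mu (sval x).
  by move=> x; have := valP x; rewrite /= validE => /andP [].
pose f := fun x : infl mu =>
  ((insub (res V1 (sval x)) : option (infl (@restr_mu V V1 mu))),
   (insub (res V2 (sval x)) : option (infl (@restr_mu V V2 mu)))).
have isS : forall (A : {set V}) (x : infl mu),
    isSome (insub (res A (sval x)) : option (infl (@restr_mu V A mu)))
    = ((res A (sval x)).1 != set0).
  move=> A x; have := insub_val_vz (vz_res A (vx x)).
  by case: insub => [u|] /=; case: eqP.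
have Hf : forall x, isSome (f x).1 || isSome (f x).2.
  move=> x; rewrite /f /= !isS.
  have := valP x; rewrite /= validE => /andP [/set0Pn [z zx] _].
  have : z \in V1 :|: V2 by rewrite Hcov inE.
  case/setUP=> zV.
    by apply/orP; left; apply/set0Pn; exists (exist _ z zV); rewrite inE.
  by apply/orP; right; apply/set0Pn; exists (exist _ z zV); rewrite inE.
pose F : infl mu -> join_t (infl (@restr_mu V V1 mu)) (infl (@restr_mu V V2 mu)) :=
  fun x => exist _ (f x) (Hf x).
have finj : forall x y, f x = f y -> x = y.
  move=> x y [E1 E2].
  have R1 := insub_inj (vz_res V1 (vx x)) (vz_res V1 (vx y)) E1.
  have R2 := insub_inj (vz_res V2 (vx x)) (vz_res V2 (vx y)) E2.
  apply: val_inj; case: (eqVneq (sval x) (sval y)) => // /eqP ne; exfalso.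
  have o : forall (A : {set V}) (a b : rawP {z : V | z \in A}), a = b -> optle a b.
    by move=> ? ? ? ->; right; left.
  have [lt1 _] := (order_iff Hcov Hcross (vx x) (vx y)).2 (conj ne (conj (o _ _ _ R1) (o _ _ _ R2))).
  have ne' : sval y <> sval x by move=> E; apply: ne.
  have [lt2 _] := (order_iff Hcov Hcross (vx y) (vx x)).2
     (conj ne' (conj (o _ _ _ (esym R1)) (o _ _ _ (esym R2)))).
  by have := proper_sub_trans lt1 (proper_sub lt2); rewrite properxx.
exists F; split.
  pose g := fun y : join_t (infl (@restr_mu V V1 mu)) (infl (@restr_mu V V2 mu)) =>
    graw (fromopt (sval y).1) (fromopt (sval y).2).
  have Hg : forall y, infl_valid mu (g y).
    move=> y; apply: graw_valid => //; try exact: vz_fromopt.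
    by case/orP: (valP y) => h; apply/orP; [left | right]; apply: ne_fromopt.
  pose G := fun y => exist _ (g y) (Hg y) : infl mu.
  have can2 : cancel G F.
    move=> y; apply: val_inj; rewrite /= /f /=.
    rewrite (@res_graw1 V mu) ?vz_fromopt // (@res_graw2 V mu) ?vz_fromopt // !insub_fromopt.
    by case: (sval y).
  exists G => // x; apply: finj; exact: (congr1 val (can2 (F x))).
move=> x y; apply: iff_trans (order_iff Hcov Hcross (vx x) (vx y)) _.
have e1 := opt_le_insub (vz_res V1 (vx x)) (vz_res V1 (vx y)).
have e2 := opt_le_insub (vz_res V2 (vx x)) (vz_res V2 (vx y)).
rewrite /join_lt /=; split; case=> ne [o1 o2].
  split; last by split; [apply/e1 | apply/e2].
  by move=> E; apply: ne; rewrite (finj _ _ E).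
split; last by split; [apply/e1 | apply/e2].
by move=> E; apply: ne; rewrite /f E.
Qed.
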